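(* Let $\Gamma$ be a cofinite graph and let $\Sigma$ be a uniform subgraph of $\Gamma$ (a subgraph with the subspace uniformity, which is itself a cofinite graph). Then: (1) If $\Sigma$ is path connected, then $\Sigma$ is cofinitely connected. (2) If $\Sigma$ is cofinitely connected, then so is its closure $\overline{\Sigma}$ in $\Gamma$ (which is a cofinite subgraph of $\Gamma$). (3) If $\Sigma$ is cofinitely connected and $f\colon\Gamma\to\Delta$ is a uniformly continuous map of graphs into a cofinite graph $\Delta$, then $f(\Sigma)$ is cofinitely connected as a cofinite subgraph of $\Delta$.
   Context: A graph $\Gamma$ is a set $\Gamma=V(\Gamma)\sqcup E(\Gamma)$ with maps $s,t\colon E(\Gamma)\to V(\Gamma)$ and a fixed-point-free involution $e\mapsto\overline e$ of $E(\Gamma)$ with $s(\overline e)=t(e)$, $t(\overline e)=s(e)$. A subgraph is a subset closed under $s,t$ and $e\mapsto\overline e$. A map of graphs sends vertices to vertices and edges to edges and commutes with $s$, $t$ and $e\mapsto\overline e$. An equivalence relation $R$ on a graph is compatible if $R\subseteq (V\times V)\cup(E\times E)$, $(e,e')\in R$ implies $(s(e),s(e')),(t(e),t(e')),(\overline e,\overline{e'})\in R$, and $(e,\overline e)\notin R$ for all edges $e$; then $\Gamma/R$ is a graph. A cofinite entourage is an entourage that is an equivalence relation with finitely many classes. A cofinite graph is a graph with a Hausdorff uniformity in which the compatible cofinite entourages form a fundamental system of entourages. A graph is path connected if any two vertices are joined by a finite path of edges $e_1\cdots e_n$ with $t(e_i)=s(e_{i+1})$. A cofinite graph is cofinitely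 connected if $\Gamma/R$ is path connected for every compatible cofinite entourage $R$. *)

(* Defs.v *)
From Stdlib Require Import List.
Set Implicit Arguments.

Record graph := Graph {
  gV : Type;
  gE : Type;
  gs : gE -> gV;
  gt : gE -> gV;
  grev : gE -> gE;
  grevK : forall e, grev (grev e) = e;
  grev_neq : forall e, grev e <> e;
  gs_rev : forall e, gs (grev e) = gt e;
  gt_rev : forall e, gt (grev e) = gs e
}.
Arguments gs {g} _.
Arguments gt {g} _.
Arguments grev {g} _.

(** The underlying set Gamma = V(Gamma) disjoint-union E(Gamma). *)
Definition pt (G : graph) : Type := (gV G + gE G)%type.

Definition rel (X : Type) := X -> X -> Prop.

Definition subgraph (G : graph) (S : pt G -> Prop) : Prop :=
  forall e, S (inr e) ->
    S (inl (gs e)) /\ S (inl (gt e)) /\ S (inr (grev e)).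

Record is_uniformity (X : Type) (U : rel X -> Prop) : Prop := {
  unif_total : U (fun _ _ => True);
  unif_up : forall D D', U D -> (forall x y, D x y -> D' x y) -> U D';
  unif_inter : forall D D', U D -> U D' -> U (fun x y => D x y /\ D' x y);
  unif_refl : forall D x, U D -> D x x;
  unif_sym : forall D, U D -> U (fun x y => D y x);
  unif_half : forall D, U D ->
    exists D', U D' /\ forall x y z, D' x y -> D' y z -> D x z
}.

Definition hausdorff (X : Type) (U : rel X -> Prop) : Prop :=
  forall x y, (forall D, U D -> D x y) -> x = y.

(** Notions relative to a subset S of the underlying set of a graph
    (S = everything for the whole graph). *)

Definition equiv_on (X : Type) (S : X -> Prop) (R : rel X) : Prop :=
  (forall x, S x -> R x x) /\
  (forall x y, S x -> S y -> R x y -> R y x) /\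
  (forall x y z, S x -> S y -> S z -> R x y -> R y z -> R x z).

Definition finite_classes_on (X : Type) (S : X -> Prop) (R : rel X) : Prop :=
  exists l : list X, (forall y, In y l -> S y) /\
    forall x, S x -> exists y, In y l /\ R x y.

Definition compatible_on (G : graph) (S : pt G -> Prop) (R : rel (pt G)) : Prop :=
  (forall v e, S (inl v) -> S (inr e) ->
      ~ R (inl v) (inr e) /\ ~ R (inr e) (inl v)) /\
  (forall e e', S (inr e) -> S (inr e') -> R (inr e) (inr e') ->
      R (inl (gs e)) (inl (gs e')) /\ R (inl (gt e)) (inl (gt e')) /\
      R (inr (grev e)) (inr (grev e'))) /\
  (forall e, S (inr e) -> ~ R (inr e) (inr (grev e))).

Definition full (X : Type) : X -> Prop := fun _ => True.

Definition cofinite_graph (G : graph) (U : rel (pt G) -> Prop) : Prop :=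
  is_uniformity U /\ hausdorff U /\
  forall D, U D -> exists R, U R /\ equiv_on (@full _) R /\
     finite_classes_on (@full _) R /\ compatible_on (@full _) R /\
     (forall x y, R x y -> D x y).

(** Entourages of the subspace uniformity on S. *)
Definition sub_entourage (X : Type) (U : rel X -> Prop) (S : X -> Prop)
  (D : rel X) : Prop :=
  exists D0, U D0 /\ forall x y, S x -> S y -> D0 x y -> D x y.

(** Walk in S from v to w along edges e1 ... en, where consecutive incidences
    are taken modulo R: s(e1) R v ... (in S/R: a path of edge classes). *)
Fixpoint walk (G : graph) (S : pt G -> Prop) (R : rel (pt G))
  (v : gV G) (l : list (gE G)) (w : gV G) : Prop :=
  match l with
  | nil => R (inl v) (inl w)
  | e :: l' => S (inr e) /\ R (inl v) (inl (gs e)) /\ walk S R (gt e) l' w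
  end.

Definition path_connected (G : graph) (S : pt G -> Prop) : Prop :=
  forall v w, S (inl v) -> S (inl w) ->
    exists l, walk S (fun x y => x = y) v l w.

Definition quotient_path_connected (G : graph) (S : pt G -> Prop)
  (R : rel (pt G)) : Prop :=
  forall v w, S (inl v) -> S (inl w) -> exists l, walk S R v l w.

Definition cofinitely_connected (G : graph) (U : rel (pt G) -> Prop)
  (S : pt G -> Prop) : Prop :=
  forall R, sub_entourage U S R -> equiv_on S R -> finite_classes_on S R ->
    compatible_on S R -> quotient_path_connected S R.

Definition closure (X : Type) (U : rel X -> Prop) (S : X -> Prop) : X -> Prop :=
  fun x => forall D, U D -> exists y, S y /\ D x y.

Definition graph_map {G H : graph} (fV : gV G -> gV H) (fE : gE G -> gE H) : Prop :=
  forall e, gs (fE e) = fV (gs e) /\ gt (fE e) = fV (gt e) /\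
            fE (grev e) = grev (fE e).

Definition gmap {G H : graph} (fV : gV G -> gV H) (fE : gE G -> gE H)
  (x : pt G) : pt H :=
  match x with inl v => inl (fV v) | inr e => inr (fE e) end.

Definition unif_continuous (X Y : Type) (UX : rel X -> Prop) (UY : rel Y -> Prop)
  (f : X -> Y) : Prop :=
  forall D, UY D -> UX (fun x y => D (f x) (f y)).

Definition image (X Y : Type) (f : X -> Y) (S : X -> Prop) : Y -> Prop :=
  fun y => exists x, S x /\ f x = y.

(* Main.v *)
Require Import Defs.
From Stdlib Require Import List Classical.

Lemma walk_mono (G : graph) (S S' : pt G -> Prop) (R R' : rel (pt G)) :
  (forall x, S x -> S' x) -> (forall x y, R x y -> R' x y) ->
  forall l v w, walk S R v l w -> walk S' R' v l w.
Proof.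
  intros HS HR l; induction l as [|e l IH]; simpl; intros v w H.
  - auto.
  - destruct H as [H1 [H2 H3]]; auto.
Qed.

Lemma walk_eq (G : graph) (S : pt G -> Prop) (R : rel (pt G)) :
  subgraph S -> (forall x, S x -> R x x) ->
  forall l v w, S (inl v) -> S (inl w) -> walk S (fun x y => x = y) v l w -> walk S R v l w.
Proof.
  intros HS Hr l; induction l as [|e l IH]; simpl; intros v w Hv Hw H.
  - subst. inversion H; subst; auto.
  - destruct H as [H1 [H2 H3]]. inversion H2; subst.
    destruct (HS e H1) as [_ [Ht _]]. auto.
Qed.

Lemma walk_adjust (G : graph) (S C : pt G -> Prop) (R : rel (pt G)) :
  subgraph S -> (forall x, S x -> C x) -> equiv_on C R ->
  forall l v w v0 w0, walk S R v l w -> C (inl v0) -> C (inl w0) ->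
  S (inl v) -> S (inl w) -> R (inl v0) (inl v) -> R (inl w) (inl w0) ->
  walk C R v0 l w0.
Proof.
  intros HS HSC [Hr [Hs Ht]] l; induction l as [|e l IH]; simpl;
    intros v w v0 w0 H Hv0 Hw0 Hv Hw R1 R2.
  - assert (R (inl v0) (inl w)) by (apply Ht with (inl v); auto).
    apply Ht with (inl w); auto.
  - destruct H as [H1 [H2 H3]].
    destruct (HS e H1) as [Hse [Hte _]].
    split; [auto|split].
    + apply Ht with (inl v); auto.
    + apply IH with (gt e) w; auto.
Qed.

Lemma reps (X : Type) (S C : X -> Prop) (R : rel X) :
  (forall x, S x -> C x) -> equiv_on C R ->
  forall l, (forall y, In y l -> C y) ->
  exists l', (forall y, In y l' -> S y) /\
    forall y, In y l -> forall x, S x -> R x y -> exists z, In z l' /\ R x z.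
Proof.
  intros HSC [Hr [Hs Ht]] l; induction l as [|y l IH]; intros Hl.
  - exists nil; split; [intros y []|intros y []].
  - destruct IH as [l' [H1 H2]]; [intros; apply Hl; simpl; auto|].
    destruct (classic (exists x0, S x0 /\ R x0 y)) as [[x0 [Sx0 Rx0]]|Hn].
    + exists (x0 :: l'); split.
      * intros z [<-|Hz]; auto.
      * intros z [<-|Hz] x Sx Rx.
        -- exists x0; split; [left; auto|].
           apply Ht with y; auto. apply Hl; left; auto.
           apply Hs; auto. apply Hl; left; auto.
        -- destruct (H2 z Hz x Sx Rx) as [u [Hu Ru]]; exists u; split; [right|]; auto.
    + exists l'; split; auto.
      intros z [<-|Hz] x Sx Rx.
      * exfalso; apply Hn; eauto.
      * eauto.
Qed.

Lemma preims (X Y : Type) (f : X -> Y) (S : X -> Prop) :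
  forall l, (forall y, In y l -> image f S y) ->
  exists l', (forall x, In x l' -> S x) /\
    forall y, In y l -> exists x, In x l' /\ f x = y.
Proof.
  intro l; induction l as [|y l IH]; intros Hl.
  - exists nil; split; intros _ [].
  - destruct IH as [l' [H1 H2]]; [intros; apply Hl; simpl; auto|].
    destruct (Hl y (or_introl eq_refl)) as [x [Sx Fx]].
    exists (x :: l'); split.
    + intros z [<-|Hz]; auto.
    + intros z [<-|Hz].
      * exists x; split; [left|]; auto.
      * destruct (H2 z Hz) as [u [Hu Fu]]; exists u; split; [right|]; auto.
Qed.

Lemma walk_map (G H : graph) (fV : gV G -> gV H) (fE : gE G -> gE H)
  (S : pt G -> Prop) (R : rel (pt H)) :
  graph_map fV fE ->
  forall l v w, walk S (fun x y => R (gmap fV fE x) (gmap fV fE y)) v l w ->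
  walk (image (gmap fV fE) S) R (fV v) (map fE l) (fV w).
Proof.
  intros Hf l; induction l as [|e l IH]; simpl; intros v w Hw.
  - exact Hw.
  - destruct Hw as [H1 [H2 H3]]. destruct (Hf e) as [Es [Et _]].
    split; [exists (inr e); split; auto|].
    rewrite Es, Et. split; [exact H2|]. apply IH; exact H3.
Qed.

Theorem mainTheorem2 (G : graph) (U : rel (pt G) -> Prop)
  (HG : cofinite_graph U) (S : pt G -> Prop) (HS : subgraph S) :
  (path_connected S -> cofinitely_connected U S) /\
  (cofinitely_connected U S -> cofinitely_connected U (closure U S)) /\
  (forall (H : graph) (UH : rel (pt H) -> Prop) (fV : gV G -> gV H)
     (fE : gE G -> gE H),
     cofinite_graph UH -> graph_map fV fE ->
     unif_continuous U UH (gmap fV fE) ->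
     cofinitely_connected U S ->
     cofinitely_connected UH (image (gmap fV fE) S)).
Proof.
  destruct HG as [HU _].
  split; [|split].
  - intros Hp R _ Heq _ _ v w Hv Hw.
    destruct (Hp v w Hv Hw) as [l Hl]. exists l.
    destruct Heq as [Hr _]. apply walk_eq; auto.
  - intros Hc R [D0 [HD0 HD]] Heq [l [Hl1 Hl2]] Hcomp v w Hv Hw.
    set (C := closure U S) in *.
    assert (HSC : forall x, S x -> C x).
    { intros x Sx D HD'. exists x; split; auto. apply (unif_refl HU); auto. }
    pose proof Heq as Heq'. destruct Heq' as [Hr [Hs Ht]].
    destruct Hcomp as [Hc1 [Hc2 Hc3]].
    assert (HQ : quotient_path_connected S R).
    { apply Hc.
      - exists D0; split; auto.
      - split; [|split]; intros; [apply Hr|apply Hs|apply Ht with y]; auto.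
      - destruct (@reps _ S C R HSC Heq l Hl1) as [l' [H1 H2]].
        exists l'; split; auto.
        intros x Sx. destruct (Hl2 x (HSC x Sx)) as [y [Hy Ry]]. eauto.
      - split; [|split]; intros; auto. }
    assert (Hnear : forall u, C (inl u) -> exists u', S (inl u') /\ R (inl u) (inl u')).
    { intros u Hu. destruct (Hu D0 HD0) as [y [Sy Dy]].
      destruct y as [u'|e].
      - exists u'; split; auto.
      - exfalso. apply (proj1 (Hc1 u e Hu (HSC _ Sy))). apply HD; auto. }
    destruct (Hnear v Hv) as [v' [Sv' Rv']].
    destruct (Hnear w Hw) as [w' [Sw' Rw']].
    destruct (HQ v' w' Sv' Sw') as [l0 Hl0].
    exists l0. apply walk_adjust with S v' w'; auto.
  - intros H UH fV fE _ Hf Huc Hc R [D0 [HD0 HD]] Heq [l [Hl1 Hl2]] Hcomp v w Hv Hw.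
    set (R' := fun x y => R (gmap fV fE x) (gmap fV fE y)).
    destruct Heq as [Hr [Hs Ht]].
    destruct Hcomp as [Hc1 [Hc2 Hc3]].
    assert (Himg : forall x, S x -> image (gmap fV fE) S (gmap fV fE x)).
    { intros x Sx; exists x; auto. }
    assert (HQ : quotient_path_connected S R').
    { apply Hc.
      - exists (fun x y => D0 (gmap fV fE x) (gmap fV fE y)); split; [apply Huc; auto|].
        intros x y Sx Sy D. unfold R'. apply HD; auto.
      - unfold R'; split; [|split]; intros.
        + apply Hr; auto.
        + apply Hs; auto.
        + apply Ht with (gmap fV fE y); auto.
      - destruct (@preims _ _ _ _ l Hl1) as [l' [H1 H2]].
        exists l'; split; auto.
        intros x Sx. destruct (Hl2 _ (Himg x Sx)) as [y [Hy Ry]].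
        destruct (H2 y Hy) as [x' [Hx' Fx']]. exists x'; split; auto.
        unfold R'; rewrite Fx'; auto.
      - unfold R'; split; [|split].
        + intros v0 e Sv Se. exact (Hc1 (fV v0) (fE e) (Himg _ Sv) (Himg _ Se)).
        + intros e e' Se Se' Re.
          destruct (Hf e) as [Es [Et Er]]. destruct (Hf e') as [Es' [Et' Er']].
          destruct (Hc2 (fE e) (fE e') (Himg _ Se) (Himg _ Se') Re) as [A [B C]].
          simpl. rewrite Er, Er', <- Es, <- Es', <- Et, <- Et'. auto.
        + intros e Se. destruct (Hf e) as [_ [_ Er]]. simpl. rewrite Er.
          exact (Hc3 (fE e) (Himg _ Se)). }
    destruct Hv as [[v0|e] [Sv Fv]]; [|discriminate].
    destruct Hw as [[w0|e] [Sw Fw]]; [|discriminate].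
    simpl in Fv, Fw. injection Fv as <-. injection Fw as <-.
    destruct (HQ v0 w0 Sv Sw) as [l0 Hl0].
    exists (map fE l0). apply walk_map; auto.
Qed.
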